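(* Let $(M_0,d,\Gamma)$ be a cone-like space. Then the metric completion $\widehat{M_0}$ of $(M_0,d)$ satisfies that $\widehat{M_0}\setminus M_0$ consists of exactly one point $\omega$.
   Context: A cone-like space is a locally compact metric space $(M_0,d)$ together with a finitely generated, non-trivial group $\Gamma$ acting freely and properly discontinuously on $M_0$ by homotheties (i.e. for each $f\in\Gamma$ there is $\rho(f)>0$ with $d(f(x),f(y))=\rho(f)d(x,y)$ for all $x,y$), such that the identity is the only element of $\Gamma$ acting as an isometry, and such that the quotient $M_0/\Gamma$ is compact. *)

(* Defs.v *)
From Stdlib Require Import Reals List.
Open Scope R_scope.
Set Implicit Arguments.

Section MetricDefs.
Variable M : Type.
Variable d : M -> M -> R.

Definition is_metric : Prop :=
  (forall x y, 0 <= d x y) /\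
  (forall x y, d x y = 0 <-> x = y) /\
  (forall x y, d x y = d y x) /\
  (forall x y z, d x z <= d x y + d y z).

Definition open_set (U : M -> Prop) : Prop :=
  forall x, U x -> exists r, 0 < r /\ forall y, d x y < r -> U y.

Definition compact_set (K : M -> Prop) : Prop :=
  forall (I : Type) (U : I -> M -> Prop),
    (forall i, open_set (U i)) ->
    (forall x, K x -> exists i, U i x) ->
    exists l : list I, forall x, K x -> exists i, In i l /\ U i x.

Definition locally_compact : Prop :=
  forall x, exists V : M -> Prop, compact_set V /\
    exists r, 0 < r /\ forall y, d x y < r -> V y.

Definition cauchy (u : nat -> M) : Prop :=
  forall eps, 0 < eps -> exists N, forall n m, (N <= n)%nat -> (N <= m)%nat ->
    d (u n) (u m) < eps.

Definition converges (u : nat -> M) (l : M) : Prop :=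
  forall eps, 0 < eps -> exists N, forall n, (N <= n)%nat -> d (u n) l < eps.

Definition complete : Prop :=
  forall u, cauchy u -> exists l, converges u l.
End MetricDefs.

Definition is_completion (M X : Type) (d : M -> M -> R) (dX : X -> X -> R)
    (i : M -> X) : Prop :=
  is_metric dX /\ complete dX /\
  (forall x y, dX (i x) (i y) = d x y) /\
  (forall z eps, 0 < eps -> exists x, dX (i x) z < eps).

Definition is_group (G : Type) (mul : G -> G -> G) (inv : G -> G) (e : G) : Prop :=
  (forall a b c, mul a (mul b c) = mul (mul a b) c) /\
  (forall a, mul e a = a /\ mul a e = a) /\
  (forall a, mul (inv a) a = e /\ mul a (inv a) = e).

(* evaluation of a word in generators and their inverses (true = inverse) *)
Fixpoint word_eval (G : Type) (mul : G -> G -> G) (inv : G -> G) (e : G)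
    (w : list (bool * G)) : G :=
  match w with
  | nil => e
  | (b, s) :: w' => mul (if b then inv s else s) (word_eval mul inv e w')
  end.

Definition finitely_generated (G : Type) (mul : G -> G -> G) (inv : G -> G) (e : G)
  : Prop :=
  exists S : list G, forall g, exists w : list (bool * G),
    (forall p, In p w -> In (snd p) S) /\ g = word_eval mul inv e w.

Definition is_action (G M : Type) (mul : G -> G -> G) (e : G) (act : G -> M -> M)
  : Prop :=
  (forall x, act e x = x) /\ (forall g h x, act (mul g h) x = act g (act h x)).

Definition cone_like (M G : Type) (d : M -> M -> R)
    (mul : G -> G -> G) (inv : G -> G) (e : G) (act : G -> M -> M) : Prop :=
  is_metric d /\ locally_compact d /\
  is_group mul inv e /\ finitely_generated mul inv e /\ (exists g, g <> e) /\
  is_action mul e act /\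
  (forall g, exists rho, 0 < rho /\ forall x y, d (act g x) (act g y) = rho * d x y) /\
  (forall g x, act g x = x -> g = e) /\
  (forall K, compact_set d K -> exists l : list G,
      forall g, (exists x, K x /\ K (act g x)) -> In g l) /\
  (forall g, (forall x y, d (act g x) (act g y) = d x y) -> g = e) /\
  (* M0/Gamma compact: every cover by Gamma-invariant open sets (= open sets of
     the quotient topology) has a finite subcover *)
  (forall (I : Type) (U : I -> M -> Prop),
     (forall j, open_set d (U j)) ->
     (forall j g x, U j x -> U j (act g x)) ->
     (forall x, exists j, U j x) ->
     exists l : list I, forall x, exists j, In j l /\ U j x).

(* Main.v *)
Require Import Defs.
From Stdlib Require Import Reals List Lra Lia Classical.
Open Scope R_scope.

Lemma list_ub (T : Type) (l : list T) (f : T -> R) :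
  exists B, 0 <= B /\ forall p, In p l -> f p <= B.
Proof.
  induction l as [|a l [B [HB H]]].
  - exists 0. split; [lra|]. intros p [].
  - exists (Rmax B (f a)). split.
    + eapply Rle_trans; [exact HB|apply Rmax_l].
    + intros p [<-|Hp]; [apply Rmax_r|].
      eapply Rle_trans; [apply H; exact Hp|apply Rmax_l].
Qed.

Lemma list_posmin (T : Type) (l : list T) (f : T -> R) :
  exists m, 0 < m /\ forall p, In p l -> 0 < f p -> m <= f p.
Proof.
  induction l as [|a l [m [Hm H]]].
  - exists 1. split; [lra|]. intros p [].
  - destruct (Rlt_dec 0 (f a)) as [Ha|Ha].
    + exists (Rmin m (f a)). split; [apply Rmin_pos; assumption|].
      intros p [<-|Hp] Hf; [apply Rmin_r|].
      eapply Rle_trans; [apply Rmin_l|apply H; assumption].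
    + exists m. split; [assumption|]. intros p [<-|Hp] Hf; [contradiction|].
      apply H; assumption.
Qed.

Lemma compact_closed (M X : Type) (d : M -> M -> R) (dX : X -> X -> R)
  (K : M -> Prop) (f : M -> X) (L : R) (z : X) :
  is_metric d -> is_metric dX -> 0 <= L -> compact_set d K ->
  (forall p y, dX (f p) (f y) <= L * d p y) ->
  (forall eps, 0 < eps -> exists x, K x /\ dX (f x) z < eps) ->
  exists p, K p /\ f p = z.
Proof.
  intros [Hd0 [Hdeq [Hdsym Hdtri]]] [HX0 [HXeq [HXsym HXtri]]] HL HK Hf Hz.
  destruct (classic (exists p, K p /\ f p = z)) as [H|H]; [exact H|exfalso].
  pose (U := fun (pe : M * R) y =>
    0 < snd pe /\ 2 * snd pe <= dX (f (fst pe)) z /\ d (fst pe) y < snd pe / (L+1)).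
  destruct (HK (M*R)%type U) as [l Hl].
  - intros [p e] y [He [H2 Hd]]; simpl in *.
    exists (e/(L+1) - d p y). split; [lra|]. intros w Hw.
    unfold U; simpl; repeat split; try lra.
    specialize (Hdtri p y w). lra.
  - intros y Ky. exists (y, dX (f y) z / 2).
    assert (Hne : f y <> z) by (intro E; apply H; exists y; auto).
    assert (Hpos : 0 < dX (f y) z).
    { destruct (Rle_lt_or_eq_dec _ _ (HX0 (f y) z)) as [Hl|Hl]; [exact Hl|].
      exfalso; apply Hne; apply HXeq; auto. }
    unfold U; simpl; repeat split; try lra.
    assert (Hyy : d y y = 0) by (apply Hdeq; reflexivity). rewrite Hyy.
    apply Rdiv_lt_0_compat; lra.
  - destruct (list_posmin _ l snd) as [m [Hm Hmin]].
    destruct (Hz m Hm) as [x [Kx Hx]].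
    destruct (Hl x Kx) as [[p e] [Hin [He [H2 Hd]]]]. simpl in *.
    assert (Hme : m <= e) by (apply (Hmin (p,e)); auto).
    assert (Hq : e/(L+1)*(L+1) = e) by (field; lra).
    assert (Hdx : d p x * (L+1) < e).
    { rewrite <- Hq. apply Rmult_lt_compat_r; lra. }
    specialize (Hd0 p x). specialize (Hf p x). specialize (HXtri (f p) (f x) z).
    nra.
Qed.

Theorem mainTheorem2 (M G : Type) (d : M -> M -> R)
    (mul : G -> G -> G) (inv : G -> G) (e : G) (act : G -> M -> M) :
  inhabited M ->
  cone_like d mul inv e act ->
  forall (X : Type) (dX : X -> X -> R) (i : M -> X),
    is_completion d dX i ->
    exists omega : X, (~ exists x, i x = omega) /\
      forall z : X, (~ exists x, i x = z) -> z = omega.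
Proof.
  intros [a0] HC X dX i HCo.
  destruct HCo as [HdXm [Hcomp [Hiso Hdense]]].
  pose proof HdXm as [HX0 [HXeq [HXsym HXtri]]].
  destruct HC as (Hm & Hlc & Hgrp & _ & [g0 Hg0] & [Hact1 Hact2] & Hhom & Hfree & _ & Hisoe & Hcoc).
  pose proof Hm as [Hd0 [Hdeq [Hdsym Hdtri]]].
  destruct Hgrp as [Hassoc [Hid Hinv]].
  pose (b0 := act g0 a0).
  assert (HD0 : 0 < d a0 b0).
  { destruct (Rle_lt_or_eq_dec _ _ (Hd0 a0 b0)) as [H|H]; [exact H|].
    exfalso. apply Hg0. apply (Hfree g0 a0). symmetry. apply Hdeq. auto. }
  pose (rho := fun g => d (act g a0) (act g b0) / d a0 b0).
  assert (Hrho : forall g x y, d (act g x) (act g y) = rho g * d x y).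
  { intros g x y. destruct (Hhom g) as [r [Hr Hg]]. unfold rho. rewrite !Hg.
    field. lra. }
  assert (Hrpos : forall g, 0 < rho g).
  { intros g. destruct (Hhom g) as [r [Hr Hg]]. unfold rho. rewrite Hg.
    replace (r * d a0 b0 / d a0 b0) with r by (field; lra). exact Hr. }
  clearbody rho.
  assert (Hrmul : forall g f, rho (mul g f) = rho g * rho f).
  { intros g f. apply (Rmult_eq_reg_r (d a0 b0)); [|lra].
    rewrite <- (Hrho (mul g f)), !Hact2, Hrho, Hrho. ring. }
  assert (Hre : rho e = 1).
  { apply (Rmult_eq_reg_r (d a0 b0)); [|lra].
    rewrite <- Hrho, !Hact1. ring. }
  assert (Hrinv : forall g, rho (inv g) * rho g = 1).
  { intros g. rewrite <- Hrmul. destruct (Hinv g) as [-> _]. exact Hre. }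
  assert (Hinj : forall a b, rho a = rho b -> a = b).
  { intros a b Hab.
    assert (Hc : mul a (inv b) = e).
    { apply Hisoe. intros x y. rewrite Hrho, Hrmul, Hab.
      rewrite <- Hrmul. destruct (Hinv b) as [_ ->]. rewrite Hre. ring. }
    transitivity (mul (mul a (inv b)) b).
    - rewrite <- Hassoc. destruct (Hinv b) as [-> _]. destruct (Hid a) as [_ ->]. reflexivity.
    - rewrite Hc. destruct (Hid b) as [-> _]. reflexivity. }
  assert (Hcomm : forall g f, mul g f = mul f g).
  { intros g f. apply Hinj. rewrite !Hrmul. ring. }
  assert (Hinvact : forall g x, act (inv g) (act g x) = x).
  { intros g x. rewrite <- Hact2. destruct (Hinv g) as [-> _]. apply Hact1. }
  assert (Hactinv : forall g x, act g (act (inv g) x) = x).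
  { intros g x. rewrite <- Hact2. destruct (Hinv g) as [_ ->]. apply Hact1. }
  assert (Hh : exists h, rho h < 1).
  { destruct (Rlt_dec (rho g0) 1) as [H|H]; [exists g0; exact H|].
    exists (inv g0).
    assert (rho g0 <> 1) by (intro E; apply Hg0; apply Hinj; rewrite Hre; exact E).
    specialize (Hrinv g0). specialize (Hrpos (inv g0)). nra. }
  destruct Hh as [h Hh].
  assert (Hq0 : 0 < rho h) by apply Hrpos.
  pose (it := fun k x => Nat.iter k (act h) x).
  assert (Hit1 : forall k x y, d (it k x) (it k y) = rho h ^ k * d x y).
  { induction k as [|k IH]; intros x y; simpl.
    - ring.
    - unfold it in *; simpl. rewrite Hrho, IH. ring. }
  assert (HitS : forall k x, it (S k) x = act h (it k x)) by reflexivity.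
  assert (Hitadd : forall n m x, it (n + m)%nat x = it n (it m x)).
  { intros. unfold it. apply Nat.iter_add. }
  assert (Hit3 : forall k x, d x (it k x) <= d x (act h x) / (1 - rho h)).
  { intros k x. induction k as [|k IH].
    - unfold it; simpl. assert (d x x = 0) by (apply Hdeq; auto).
      rewrite H. apply Rmult_le_pos; [apply Hd0|]. apply Rlt_le, Rinv_0_lt_compat; lra.
    - rewrite HitS. eapply Rle_trans; [apply (Hdtri x (act h x))|].
      rewrite Hrho. set (S := d x (act h x) / (1 - rho h)) in *.
      assert (HS : S * (1 - rho h) = d x (act h x)) by (unfold S; field; lra).
      assert (rho h * d x (it k x) <= rho h * S) by (apply Rmult_le_compat_l; lra).
      lra. }
  assert (Hitcomm : forall g k x, act g (it k x) = it k (act g x)).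
  { intros g k x. induction k as [|k IH]; [reflexivity|].
    rewrite !HitS, <- IH, <- !Hact2, Hcomm. reflexivity. }
  assert (Hsmall : forall C, 0 <= C -> forall eps, 0 < eps ->
      exists N, forall n, (N <= n)%nat -> rho h ^ n * C < eps).
  { intros C HC eps Heps.
    assert (Hab : Rabs (rho h) < 1) by (rewrite Rabs_right; lra).
    assert (Hy : 0 < eps/(C+1)) by (apply Rdiv_lt_0_compat; lra).
    destruct (pow_lt_1_zero _ Hab _ Hy) as [N HN].
    { exists N. intros n Hn. specialize (HN n Hn).
      rewrite Rabs_right in HN by (apply Rle_ge, pow_le; lra).
      set (t := eps / (C+1)) in *.
      assert (Ht : t * (C + 1) = eps) by (unfold t; field; lra).
      assert (0 <= rho h ^ n) by (apply pow_le; lra).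
      nra. } }
  assert (Hbnd : forall x n m, (n <= m)%nat ->
      d (it n x) (it m x) <= rho h ^ n * (d x (act h x) / (1 - rho h))).
  { intros x n m Hnm. replace m with (n + (m - n))%nat by lia.
    rewrite Hitadd, Hit1. apply Rmult_le_compat_l; [apply pow_le; lra|]. apply Hit3. }
  assert (HSpos : forall x, 0 <= d x (act h x) / (1 - rho h)).
  { intros x. apply Rmult_le_pos; [apply Hd0|]. apply Rlt_le, Rinv_0_lt_compat; lra. }
  assert (Hcau : forall x, cauchy dX (fun k => i (it k x))).
  { intros x eps Heps. destruct (Hsmall _ (HSpos x) eps Heps) as [N HN].
    exists N. intros n m Hn Hm2. rewrite Hiso.
    destruct (Nat.le_ge_cases n m) as [H|H].
    - eapply Rle_lt_trans; [apply Hbnd; exact H|]. apply HN; exact Hn.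
    - rewrite Hdsym. eapply Rle_lt_trans; [apply Hbnd; exact H|]. apply HN; exact Hm2. }
  destruct (Hcomp _ (Hcau a0)) as [omega Homega].
  assert (Hconv : forall x, converges dX (fun k => i (it k x)) omega).
  { intros x eps Heps.
    destruct (Hsmall (d x a0) (Hd0 _ _) (eps/2)) as [N1 HN1]; [lra|].
    destruct (Homega (eps/2)) as [N2 HN2]; [lra|].
    exists (Nat.max N1 N2). intros n Hn.
    eapply Rle_lt_trans; [apply (HXtri _ (i (it n a0)))|].
    rewrite Hiso, Hit1.
    specialize (HN1 n ltac:(lia)). specialize (HN2 n ltac:(lia)). simpl in HN2. lra. }
  assert (Hbound : forall x, dX (i x) omega <= d x (act h x) / (1 - rho h)).
  { intros x. apply Rle_plus_epsilon. intros eps Heps.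
    destruct (Hconv x eps Heps) as [N HN].
    eapply Rle_trans; [apply (HXtri _ (i (it N x)))|].
    rewrite Hiso. specialize (HN N (le_n _)). simpl in HN.
    specialize (Hit3 N x). lra. }
  exists omega. split.
  -
    intros [y Hy].
    assert (Hdy : d y (act h y) <= 0).
    { apply Rle_plus_epsilon. intros eps Heps.
      destruct (Hconv y (eps/2)) as [N HN]; [lra|].
      pose proof (HN N (le_n _)) as H1. pose proof (HN (S N) (le_S _ _ (le_n _))) as H2.
      simpl in H1, H2. rewrite <- Hy, Hiso in H1, H2.
      eapply Rle_trans; [apply (Hdtri _ (it (S N) y))|].
      rewrite HitS, (Hdsym y), Hdsym, Hrho, Hdsym.
      assert (rho h * d (it N y) y <= d (it N y) y) by (specialize (Hd0 (it N y) y); nra).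
      lra. }
    assert (Hyy : act h y = y).
    { symmetry. apply Hdeq. specialize (Hd0 y (act h y)). lra. }
    apply Hfree in Hyy. subst h. lra.
  -
    intros z Hz.
    pose (U := fun (p : M * R) y => 0 < snd p /\
      (exists V, compact_set d V /\ forall w, d (fst p) w < snd p -> V w) /\
      exists g, d (act g (fst p)) y < rho g * snd p / 2).
    destruct (Hcoc (M * R)%type U) as [l Hl].
    + intros p y [Hr [HV [g Hg]]].
      exists (rho g * snd p / 2 - d (act g (fst p)) y). split; [lra|].
      intros w Hw. split; [exact Hr|]. split; [exact HV|]. exists g.
      specialize (Hdtri (act g (fst p)) y w). lra.
    + intros p f y [Hr [HV [g Hg]]]. split; [exact Hr|]. split; [exact HV|].
      exists (mul f g). rewrite Hact2, Hrho, Hrmul.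
      specialize (Hrpos f).
      assert (rho f * d (act g (fst p)) y < rho f * (rho g * snd p / 2))
        by (apply Rmult_lt_compat_l; lra).
      lra.
    + intros y. destruct (Hlc y) as [V [HV [r [Hr Hball]]]].
      exists (y, r). split; [exact Hr|]. split; [exists V; split; assumption|].
      exists e. simpl. rewrite Hact1, Hre.
      assert (d y y = 0) by (apply Hdeq; auto). lra.
    + destruct (list_ub _ l (fun p => snd p + d (fst p) (act h (fst p)))) as [B [HB HBl]].
      destruct (list_posmin _ l snd) as [rmin [Hrmin Hrminl]].
      pose (Dec := fun x p g => In p l /\ 0 < snd p /\
        (exists V, compact_set d V /\ forall w, d (fst p) w < snd p -> V w) /\
        d (act g (fst p)) x < rho g * snd p / 2).
      assert (Hdec : forall x, exists p g, Dec x p g).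
      { intros x. destruct (Hl x) as [p [Hin [Hr [HV [g Hg]]]]].
        exists p, g. repeat split; assumption. }
      assert (Hscale : forall x p g, Dec x p g -> dX (i x) omega <= rho g * B / (1 - rho h)).
      { intros x p g [Hin [Hr [_ Hg]]].
        eapply Rle_trans; [apply Hbound|].
        unfold Rdiv. apply Rmult_le_compat_r; [apply Rlt_le, Rinv_0_lt_compat; lra|].
        set (xj := fst p) in *. set (r := snd p) in *.
        eapply Rle_trans; [apply (Hdtri _ (act g xj))|].
        eapply Rle_trans; [apply Rplus_le_compat_l, (Hdtri _ (act h (act g xj)))|].
        rewrite (Hrho h (act g xj) x).
        assert (Hk : act h (act g xj) = act g (act h xj)) by (rewrite <- !Hact2, Hcomm; reflexivity).
        rewrite Hk, Hrho.
        specialize (HBl p Hin). simpl in HBl. fold xj r in HBl.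
        specialize (Hrpos g). rewrite (Hdsym x).
        assert (rho h * d (act g xj) x <= d (act g xj) x)
          by (specialize (Hd0 (act g xj) x); nra).
        assert (rho g * (r + d xj (act h xj)) <= rho g * B)
          by (apply Rmult_le_compat_l; lra).
        lra. }
      apply HXeq. apply Rle_antisym; [|apply HX0].
      destruct (classic (exists dl c, 0 < dl /\ 0 < c /\ forall x p g,
                 Dec x p g -> dX (i x) z < dl -> c <= rho g)) as [Hcase|Hcase].
      * exfalso. destruct Hcase as [dl [c [Hdl [Hc Hc2]]]].
        pose (eta := Rmin dl (c * rmin / 4)).
        assert (Hcr : 0 < c * rmin) by (apply Rmult_lt_0_compat; lra).
        assert (Heta : 0 < eta) by (apply Rmin_pos; lra).
        assert (Heta1 : eta <= dl) by apply Rmin_l.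
        assert (Heta2 : eta <= c * rmin / 4) by apply Rmin_r.
        clearbody eta.
        destruct (Hdense z eta Heta) as [x1 Hx1].
        destruct (Hdec x1) as [p [g1 Hd1]].
        pose proof (Hc2 x1 p g1 Hd1 ltac:(lra)) as Hcg.
        destruct Hd1 as [Hin [Hr [[V [HV Hball]] Hg1]]].
        assert (Hrm : rmin <= snd p) by (apply Hrminl; assumption).
        destruct (compact_closed M X d dX V (fun w => i (act g1 w)) (rho g1) z Hm HdXm)
          as [w [_ Hw]].
        -- apply Rlt_le, Hrpos.
        -- exact HV.
        -- intros p0 y. rewrite Hiso, Hrho. lra.
        -- intros eps Heps.
           destruct (Hdense z (Rmin eps eta)) as [x Hx]; [apply Rmin_pos; lra|].
           assert (Hx2 : dX (i x) z < eta) by (eapply Rlt_le_trans; [exact Hx|apply Rmin_r]).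
           assert (Hx3 : dX (i x) z < eps) by (eapply Rlt_le_trans; [exact Hx|apply Rmin_l]).
           exists (act (inv g1) x). rewrite Hactinv. split; [|exact Hx3].
           apply Hball.
           rewrite <- (Hinvact g1 (fst p)), Hrho.
           assert (Hd1x : d x1 x < c * rmin / 2).
           { rewrite <- Hiso. specialize (HXtri (i x1) z (i x)). rewrite (HXsym z) in HXtri. lra. }
           assert (Hgx : d (act g1 (fst p)) x < rho g1 * snd p).
           { specialize (Hdtri (act g1 (fst p)) x1 x).
             assert (c * rmin <= rho g1 * snd p).
             { apply Rmult_le_compat; lra. }
             lra. }
           pose proof (Hrinv g1). pose proof (Hrpos (inv g1)). pose proof (Hrpos g1).
           assert (rho (inv g1) * d (act g1 (fst p)) x < rho (inv g1) * (rho g1 * snd p))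
             by (apply Rmult_lt_compat_l; lra).
           nra.
        -- apply Hz. exists (act g1 w). exact Hw.
      * apply Rle_plus_epsilon. intros eps Heps. rewrite Rplus_0_l.
        assert (HQ : forall dl c, 0 < dl -> 0 < c -> exists x p g,
                   Dec x p g /\ dX (i x) z < dl /\ rho g < c).
        { intros dl c Hdl Hc. apply NNPP. intro Hn. apply Hcase.
          exists dl, c. split; [exact Hdl|]. split; [exact Hc|].
          intros x p g Hd Hx. apply Rnot_lt_le. intro Hlt. apply Hn.
          exists x, p, g. auto. }
        pose (c := eps / 2 * (1 - rho h) / (B + 1)).
        assert (Hc : 0 < c).
        { unfold c. apply Rdiv_lt_0_compat; [|lra]. apply Rmult_lt_0_compat; lra. }
        destruct (HQ (eps/2) c) as [x [p [g [Hd [Hx Hg]]]]]; [lra|exact Hc|].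
        pose proof (Hscale x p g Hd) as Hs.
        assert (Hcb : rho g * B / (1 - rho h) <= eps / 2).
        { assert (E : c * B / (1 - rho h) = eps / 2 * (B / (B + 1)))
            by (unfold c; field; lra).
          assert (HBB : B / (B + 1) <= 1).
          { apply (Rmult_le_reg_r (B+1)); [lra|].
            replace (B / (B + 1) * (B + 1)) with B by (field; lra). lra. }
          assert (rho g * B / (1 - rho h) <= c * B / (1 - rho h)).
          { unfold Rdiv. apply Rmult_le_compat_r; [apply Rlt_le, Rinv_0_lt_compat; lra|].
            apply Rmult_le_compat_r; lra. }
          nra. }
        specialize (HXtri z (i x) omega). rewrite (HXsym z (i x)) in HXtri. lra.
Qed.
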